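(* Let $\alpha_{2,3} := \sum_{m=1}^{\infty} \frac{1}{3^m 2^{3^m}}$ (the Stoneham number). Then the sequence $(\{2^n \alpha_{2,3}\})_{n \in \mathbb{N}}$ does not have Poissonian pair correlations.
   Context: $\{x\}$ denotes the fractional part of $x$ and $\|x\|$ the distance from $x$ to the nearest integer. A sequence $(x_n)_{n\in\mathbb{N}}$ in $[0,1)$ has Poissonian pair correlations if for every $s \geq 0$, $F_N(s) := \frac{1}{N}\#\{1 \leq l \neq m \leq N : \|x_l - x_m\| \leq s/N\} \to 2s$ as $N\to\infty$. *)

(* Defs.v *)
From Stdlib Require Import Reals Lra List.
From Coquelicot Require Import Coquelicot.
Open Scope R_scope.

Definition frac (x : R) : R := x - IZR (Int_part x).

Definition dist_nint (x : R) : R := Rmin (frac x) (1 - frac x).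

Definition pair_count (x : nat -> R) (N : nat) (s : R) : nat :=
  length (filter
    (fun p : nat * nat =>
       if Nat.eq_dec (fst p) (snd p) then false
       else if Rle_dec (dist_nint (x (fst p) - x (snd p))) (s / INR N)
            then true else false)
    (list_prod (seq 1 N) (seq 1 N))).

Definition F_N (x : nat -> R) (N : nat) (s : R) : R :=
  INR (pair_count x N s) / INR N.

(* Poissonian pair correlations (sequence indexed x_1, x_2, ...) *)
Definition poissonian_pair_correlations (x : nat -> R) : Prop :=
  forall s : R, 0 <= s -> is_lim_seq (fun N => F_N x N s) (2 * s).

Definition stoneham_2_3 : R :=
  Series (fun k : nat => / (3 ^ (S k) * 2 ^ (3 ^ (S k)))).

(* Main.v *)
Require Import Defs.
From Stdlib Require Import Reals Lra Lia List.
From Coquelicot Require Import Coquelicot.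
Open Scope R_scope.

Definition a (k : nat) : R := / (3 ^ (S k) * 2 ^ (3 ^ (S k))).

Lemma a_pos k : 0 < a k.
Proof. unfold a. apply Rinv_0_lt_compat, Rmult_lt_0_compat; apply pow_lt; lra. Qed.

Lemma a_le K i : a (K + i) <= a K * (/3) ^ i.
Proof.
  unfold a. rewrite pow_inv, <- Rinv_mult.
  apply Rinv_le_contravar.
  - apply Rmult_lt_0_compat; [apply Rmult_lt_0_compat|]; apply pow_lt; lra.
  - replace (S (K + i)) with (S K + i)%nat by lia. rewrite pow_add.
    assert (H: 2 ^ (3 ^ S K) <= 2 ^ (3 ^ (S K + i))).
    { apply Rle_pow; [lra|]. apply Nat.pow_le_mono_r; lia. }
    assert (0 < 3 ^ S K) by (apply pow_lt; lra).
    assert (0 < 3 ^ i) by (apply pow_lt; lra).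
    assert (0 < 2 ^ (3 ^ S K)) by (apply pow_lt; lra).
    replace (3 ^ S K * 2 ^ 3 ^ S K * 3 ^ i) with (3 ^ S K * 3 ^ i * 2 ^ 3 ^ S K) by ring.
    apply Rmult_le_compat_l; [|exact H]. apply Rmult_le_pos; lra.
Qed.

Lemma geom3 : Rabs (/3) < 1.
Proof. rewrite Rabs_pos_eq; lra. Qed.

Lemma ex_tail K : ex_series (fun i => a (K + i)).
Proof.
  apply (@ex_series_le R_AbsRing R_CompleteNormedModule _ (fun i => a K * (/3) ^ i)).
  - intros i. change (norm (a (K+i))) with (Rabs (a (K+i))).
    rewrite Rabs_pos_eq; [apply a_le | left; apply a_pos].
  - apply (ex_series_scal_l (a K) (fun i => (/3)^i)). apply ex_series_geom, geom3.
Qed.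

Lemma ex_a : ex_series a.
Proof. apply (ex_tail 0). Qed.

Lemma tail_bounds K : 0 <= Series (fun i => a (K + i)) <= a K * (3/2).
Proof.
  split.
  - replace 0 with (Series (fun i => 0 * a i)).
    + apply Series_le; [|apply ex_tail]. intros n; split; [lra|]. rewrite Rmult_0_l; left; apply a_pos.
    + rewrite Series_scal_l; ring.
  - eapply Rle_trans.
    + apply (Series_le _ (fun i => a K * (/3)^i)).
      * intros; split; [left; apply a_pos | apply a_le].
      * apply (ex_series_scal_l (a K) (fun i => (/3)^i)). apply ex_series_geom, geom3.
    + rewrite Series_scal_l, Series_geom by apply geom3. right; field.
Qed.

Lemma divis j : exists t, (2 ^ (2 * 3 ^ j) = 1 + 3 ^ (j+1) * t)%nat.
Proof.
  induction j as [|j [t IH]].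
  - exists 1%nat. reflexivity.
  - exists (t + 3 * 3^j * t^2 + 3 * (3^j)^2 * t^3)%nat.
    replace (2 * 3 ^ S j)%nat with ((2 * 3^j) * 3)%nat by (simpl; lia).
    rewrite Nat.pow_mul_r, IH.
    replace (S j + 1)%nat with (S (S j)) by lia.
    replace (j+1)%nat with (S j) by lia.
    simpl. ring.
Qed.

Lemma frac_shift (z : Z) r : 0 <= r < 1 -> frac (IZR z + r) = r.
Proof.
  intros Hr. unfold frac, Int_part.
  rewrite <- (tech_up (IZR z + r) (z+1)).
  - rewrite minus_IZR, plus_IZR. simpl. ring.
  - rewrite plus_IZR; simpl; lra.
  - rewrite plus_IZR; simpl; lra.
Qed.

Lemma INR2 : INR 2 = 2. Proof. simpl; ring. Qed.
Lemma INR3 : INR 3 = 3. Proof. simpl; ring. Qed.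

Lemma real_divis j t : (2 ^ (2 * 3 ^ j) = 1 + 3 ^ (j+1) * t)%nat ->
  2 ^ (2 * 3 ^ j) - 1 = 3 ^ (j+1) * INR t.
Proof.
  intros H. apply (f_equal INR) in H.
  rewrite pow_INR, plus_INR, mult_INR, pow_INR, INR2, INR3 in H. simpl INR in H. lra.
Qed.

Lemma term_int j n t k : (2 ^ (2 * 3 ^ j) = 1 + 3 ^ (j+1) * t)%nat ->
  (3 ^ (j+1) <= n)%nat -> (k <= j)%nat ->
  2 ^ n * (2 ^ (2 * 3 ^ j) - 1) * a k = INR (2 ^ (n - 3 ^ S k) * 3 ^ (j - k) * t).
Proof.
  intros Ht Hn Hk. rewrite (real_divis j t Ht).
  rewrite !mult_INR, !pow_INR, INR2, INR3.
  assert (H1: (3 ^ S k <= n)%nat).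
  { eapply Nat.le_trans; [|exact Hn]. apply Nat.pow_le_mono_r; lia. }
  replace n with ((n - 3 ^ S k) + 3 ^ S k)%nat at 1 by lia.
  replace (j+1)%nat with ((j - k) + S k)%nat by lia.
  rewrite !pow_add. unfold a.
  assert (0 < 3 ^ S k) by (apply pow_lt; lra).
  assert (0 < 2 ^ (3 ^ S k)) by (apply pow_lt; lra).
  field. split; lra.
Qed.

Lemma head_int j n t : (2 ^ (2 * 3 ^ j) = 1 + 3 ^ (j+1) * t)%nat ->
  (3 ^ (j+1) <= n)%nat ->
  exists z : nat, 2 ^ n * (2 ^ (2 * 3 ^ j) - 1) * sum_f_R0 a j = INR z.
Proof.
  intros Ht Hn.
  assert (G: forall j', (j' <= j)%nat -> exists z : nat,
     2 ^ n * (2 ^ (2 * 3 ^ j) - 1) * sum_f_R0 a j' = INR z).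
  { induction j' as [|j' IH]; intros Hj.
    - simpl. eexists. apply (term_int j n t 0 Ht Hn). lia.
    - destruct (IH ltac:(lia)) as [z Hz]. change (sum_f_R0 a (S j')) with (sum_f_R0 a j' + a (S j')).
      exists (z + 2 ^ (n - 3 ^ S (S j')) * 3 ^ (j - S j') * t)%nat.
      rewrite plus_INR, <- Hz. rewrite <- (term_int j n t (S j') Ht Hn Hj). ring. }
  apply G; lia.
Qed.

Definition xs (n : nat) : R := frac (2 ^ n * stoneham_2_3).

Lemma pair_close j n : (1 <= j)%nat -> (3 ^ (j+1) <= n < 2 * 3 ^ (j+1))%nat ->
  dist_nint (xs (n + 2 * 3 ^ j) - xs n) <= (1/8) / INR (3 ^ (j+2)).
Proof.
  intros Hj Hn.
  set (P := (2 * 3 ^ j)%nat).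
  destruct (divis j) as [t Ht].
  destruct (head_int j n t Ht ltac:(lia)) as [z Hz].
  assert (Hs : stoneham_2_3 = sum_f_R0 a j + Series (fun k => a (S j + k))).
  { change stoneham_2_3 with (Series a). apply (Series_incr_n a (S j)); [lia | apply ex_a]. }
  set (T := Series (fun k => a (S j + k))) in *.
  destruct (tail_bounds (S j)) as [T0 T1]. fold T in T0, T1.
  set (C := 2 ^ n * (2 ^ P - 1)).
  assert (HC : 0 <= C).
  { unfold C. apply Rmult_le_pos; [left; apply pow_lt; lra|].
    assert (1 <= 2 ^ P) by (apply pow_R1_Rle; lra). lra. }
  set (v := (3 ^ j)%nat) in *.
  assert (Hv : (3 <= v)%nat).
  { unfold v. replace 3%nat with (3^1)%nat at 1 by reflexivity. apply Nat.pow_le_mono_r; lia. }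
  assert (E1 : (3 ^ (j+1) = 3 * v)%nat) by (unfold v; rewrite Nat.pow_add_r; simpl; lia).
  assert (E2 : (3 ^ (j+2) = 9 * v)%nat) by (unfold v; rewrite Nat.pow_add_r; simpl; lia).
  set (d := (3 ^ (j+2) - (n + P))%nat).
  assert (Hd : (4 <= d)%nat) by (unfold d, P; lia).
  assert (EN : (3 ^ (j+2) = (n + P) + d)%nat) by (unfold d, P; lia).
  assert (Hd2 : 16 <= 2 ^ d).
  { replace 16 with (2 ^ 4) by ring. apply Rle_pow; [lra | exact Hd]. }
  assert (HN : INR (3 ^ (j+2)) = 3 ^ (S (S j))).
  { rewrite pow_INR, INR3. f_equal. lia. }
  assert (HN0 : 0 < 3 ^ (S (S j))) by (apply pow_lt; lra).
  assert (HCT : C * T <= (3/32) / 3 ^ (S (S j))).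
  { eapply Rle_trans. { apply Rmult_le_compat_l; [exact HC | exact T1]. }
    unfold C, a.
    assert (EN' : (n + P + d = 3 ^ S (S j))%nat) by (rewrite <- EN; f_equal; lia).
    rewrite <- EN', !pow_add.
    assert (0 < 2 ^ n) by (apply pow_lt; lra).
    assert (0 < 2 ^ P) by (apply pow_lt; lra).
    assert (0 < 2 ^ d) by (apply pow_lt; lra).
    apply (Rmult_le_reg_r (3 ^ S (S j) * (2 ^ n * 2 ^ P * 2 ^ d))).
    { apply Rmult_lt_0_compat; [lra|]. repeat apply Rmult_lt_0_compat; lra. }
    field_simplify; try lra.
    assert (0 <= 2 ^ n * 2 ^ P * (2 ^ d - 16)) by (apply Rmult_le_pos; [apply Rmult_le_pos|]; lra).
    nra. }
  assert (HCT0 : 0 <= C * T) by (apply Rmult_le_pos; lra).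
  assert (Hdiff : xs (n + P) - xs n = IZR (Z.of_nat z + Int_part (2 ^ n * stoneham_2_3)
                                         - Int_part (2 ^ (n + P) * stoneham_2_3)) + C * T).
  { unfold xs, frac. rewrite minus_IZR, plus_IZR, <- INR_IZR_INZ, <- Hz.
    rewrite pow_add, Hs. unfold C, P. ring. }
  fold P. rewrite Hdiff. unfold dist_nint. rewrite frac_shift.
  - eapply Rle_trans; [apply Rmin_l|]. rewrite HN. eapply Rle_trans; [exact HCT|].
    unfold Rdiv. apply Rmult_le_compat_r; [left; apply Rinv_0_lt_compat; lra | lra].
  - split; [lra|]. eapply Rle_lt_trans; [exact HCT|].
    apply (Rmult_lt_reg_r (3 ^ S (S j))); [lra|]. unfold Rdiv. rewrite Rmult_assoc, Rinv_l by lra.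
    assert (1 <= 3 ^ S (S j)) by (apply pow_R1_Rle; lra). lra.
Qed.

Lemma count_lb j : (1 <= j)%nat -> (3 ^ (j+1) <= pair_count xs (3 ^ (j+2)) (1/8))%nat.
Proof.
  intros Hj. unfold pair_count.
  set (L := map (fun n => (n + 2 * 3 ^ j, n)%nat) (seq (3 ^ (j+1)) (3 ^ (j+1)))).
  assert (HL : length L = (3 ^ (j+1))%nat) by (unfold L; rewrite length_map, length_seq; reflexivity).
  rewrite <- HL. apply NoDup_incl_length.
  - unfold L. apply NoDup_map_NoDup_ForallPairs; [|apply seq_NoDup].
    intros u w _ _ E. injection E; lia.
  - intros [p q] Hin. unfold L in Hin. apply in_map_iff in Hin.
    destruct Hin as [n [E Hn]]. injection E as E1 E2. subst p q.
    apply in_seq in Hn.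
    assert (Hv : (3 <= 3 ^ j)%nat).
    { replace 3%nat with (3^1)%nat at 1 by reflexivity. apply Nat.pow_le_mono_r; lia. }
    assert (E1 : (3 ^ (j+1) = 3 * 3 ^ j)%nat) by (rewrite Nat.pow_add_r; simpl; lia).
    assert (E2 : (3 ^ (j+2) = 9 * 3 ^ j)%nat) by (rewrite Nat.pow_add_r; simpl; lia).
    apply filter_In. split.
    + apply in_prod; apply in_seq; lia.
    + cbn [fst snd].
      destruct (Nat.eq_dec _ _) as [e|_]; [lia|].
      destruct (Rle_dec _ _) as [_|f]; [reflexivity|].
      exfalso; apply f. apply pair_close; lia.
Qed.

Theorem theorem3 :
  ~ poissonian_pair_correlations (fun n : nat => frac (2 ^ n * stoneham_2_3)).
Proof.
  intros H. specialize (H (1/8) ltac:(lra)).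
  apply is_lim_seq_spec in H.
  destruct (H (mkposreal (1/12) ltac:(lra))) as [N0 HN0]. simpl in HN0.
  set (j := S N0).
  assert (Hj : (N0 <= 3 ^ (j + 2))%nat).
  { assert (j + 2 < 3 ^ (j+2))%nat by (apply Nat.pow_gt_lin_r; lia). lia. }
  specialize (HN0 _ Hj).
  assert (Hc := count_lb j ltac:(unfold j; lia)).
  change (fun n : nat => frac (2 ^ n * stoneham_2_3)) with xs in HN0.
  unfold F_N in HN0.
  apply le_INR in Hc.
  rewrite !pow_INR in Hc. rewrite pow_INR in HN0.
  replace (INR 3) with 3 in * by (simpl; ring).
  assert (0 < 3 ^ (j+1)) by (apply pow_lt; lra).
  replace (3 ^ (j+2)) with (3 * 3 ^ (j+1)) in HN0 by (rewrite !pow_add; simpl; ring).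
  set (c := INR (pair_count xs (3 ^ (j + 2)) (1 / 8))) in *.
  assert (c / (3 * 3 ^ (j+1)) >= 1/3).
  { apply Rle_ge. apply (Rmult_le_reg_r (3 * 3 ^ (j+1))); [lra|].
    field_simplify; lra. }
  apply Rabs_lt_between in HN0. lra.
Qed.
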